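(* Let $n\geq 2$ and let $G$ be a group of type $MC(n)$. Then for every homomorphism $\psi$ from $G$ to the group of orientation-preserving $C^2$ diffeomorphisms of a compact interval $I$, the image $\psi(G)$ is abelian.
   Context: A group $G$ is of type $MC(n)$ if it is nonabelian and has a generating set $\{a_i,b_i\}_{i=1}^n\cup\{c_j\}_{j=1}^{n-1}$ satisfying: (1) $a_ia_j=a_ja_i$, $b_ib_j=b_jb_i$, $c_ic_j=c_jc_i$, $a_ic_j=c_ja_i$ for all $i,j$; (2) $a_ib_j=b_ja_i$ if $i\neq j$; (3) $b_ic_j=c_jb_i$ if $j\neq i,i-1$; (4) $a_ib_ia_i=b_ia_ib_i$ for $1\le i\le n$, and $b_ic_jb_i=c_jb_ic_j$ whenever $j=i$ or $j=i-1$. *)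

(* Defs.v *)
From Stdlib Require Import Reals.
From Coquelicot Require Import Coquelicot.
Open Scope R_scope.

Definition is_group {G : Type} (mul : G -> G -> G) (inv : G -> G) (e : G) : Prop :=
  (forall x y z, mul x (mul y z) = mul (mul x y) z) /\
  (forall x, mul e x = x) /\ (forall x, mul x e = x) /\
  (forall x, mul (inv x) x = e) /\ (forall x, mul x (inv x) = e).

Inductive in_gen {G : Type} (mul : G -> G -> G) (inv : G -> G) (e : G)
  (S : G -> Prop) : G -> Prop :=
| gen_base : forall x, S x -> in_gen mul inv e S x
| gen_one : in_gen mul inv e S e
| gen_mul : forall x y, in_gen mul inv e S x -> in_gen mul inv e S y ->
    in_gen mul inv e S (mul x y)
| gen_inv : forall x, in_gen mul inv e S x -> in_gen mul inv e S (inv x).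

Definition MC {G : Type} (mul : G -> G -> G) (inv : G -> G) (e : G) (n : nat) : Prop :=
  (exists x y : G, mul x y <> mul y x) /\
  exists a b c : nat -> G,
    (forall g, in_gen mul inv e
       (fun x => (exists i, (1 <= i <= n)%nat /\ (x = a i \/ x = b i)) \/
                 (exists j, (1 <= j <= n - 1)%nat /\ x = c j)) g) /\
    (forall i j, (1 <= i <= n)%nat -> (1 <= j <= n)%nat ->
       mul (a i) (a j) = mul (a j) (a i) /\ mul (b i) (b j) = mul (b j) (b i)) /\
    (forall i j, (1 <= i <= n - 1)%nat -> (1 <= j <= n - 1)%nat ->
       mul (c i) (c j) = mul (c j) (c i)) /\
    (forall i j, (1 <= i <= n)%nat -> (1 <= j <= n - 1)%nat ->
       mul (a i) (c j) = mul (c j) (a i)) /\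
    (forall i j, (1 <= i <= n)%nat -> (1 <= j <= n)%nat -> i <> j ->
       mul (a i) (b j) = mul (b j) (a i)) /\
    (forall i j, (1 <= i <= n)%nat -> (1 <= j <= n - 1)%nat ->
       j <> i -> j <> (i - 1)%nat ->
       mul (b i) (c j) = mul (c j) (b i)) /\
    (forall i, (1 <= i <= n)%nat ->
       mul (a i) (mul (b i) (a i)) = mul (b i) (mul (a i) (b i))) /\
    (forall i j, (1 <= i <= n)%nat -> (1 <= j <= n - 1)%nat ->
       (j = i \/ j = (i - 1)%nat) ->
       mul (b i) (mul (c j) (b i)) = mul (c j) (mul (b i) (c j))).

Definition C2 (f : R -> R) : Prop :=
  forall x, ex_derive f x /\ ex_derive (Derive f) x /\
            continuous (Derive (Derive f)) x.

Definition in_I (p q x : R) : Prop := p <= x <= q.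

(* f is C^2 on [p,q]: restriction of a C^2 function on R (equivalently,
   C^2 with one-sided derivatives at the endpoints) *)
Definition C2_on (p q : R) (f : R -> R) : Prop :=
  exists g : R -> R, C2 g /\ forall x, in_I p q x -> g x = f x.

Definition Diff2_plus (p q : R) (f : R -> R) : Prop :=
  C2_on p q f /\
  (forall x, in_I p q x -> in_I p q (f x)) /\
  (exists g : R -> R, C2_on p q g /\
     (forall x, in_I p q x -> in_I p q (g x)) /\
     (forall x, in_I p q x -> g (f x) = x) /\
     (forall x, in_I p q x -> f (g x) = x)) /\
  (forall x y, in_I p q x -> in_I p q y -> x < y -> f x < f y).

(* psi is a homomorphism G -> Diff^2_+([p,q]) (elements of the target are
   functions considered up to equality on [p,q]; the group law is composition) *)
Definition hom_to_Diff2 {G : Type} (mul : G -> G -> G) (p q : R)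
  (psi : G -> R -> R) : Prop :=
  (forall g, Diff2_plus p q (psi g)) /\
  (forall g h x, in_I p q x -> psi (mul g h) x = psi g (psi h x)).

(* Main.v *)
Require Import Defs.
From Stdlib Require Import Reals Lra Lia Classical.
From Coquelicot Require Import Coquelicot.
Open Scope R_scope.

Lemma C2_cont (E : R -> R) : C2 E -> continuity E.
Proof.
  intros HE x. apply continuity_pt_filterlim. apply (@ex_derive_continuous R_AbsRing R_NormedModule). apply (HE x).
Qed.

Lemma C2_cont1 (E : R -> R) : C2 E -> continuity (Derive E).
Proof.
  intros HE x. apply continuity_pt_filterlim. apply (@ex_derive_continuous R_AbsRing R_NormedModule). apply (HE x).
Qed.

Lemma C2_cont2 (E : R -> R) : C2 E -> continuity (Derive (Derive E)).
Proof.
  intros HE x. apply continuity_pt_filterlim. apply (HE x).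
Qed.

Lemma C2_MVT (E : R -> R) a b : C2 E -> a < b ->
  exists z, a < z < b /\ E b - E a = Derive E z * (b - a).
Proof.
  intros HE Hab. destruct (MVT_cor2 E (Derive E) a b Hab) as [z [Hz1 Hz2]].
  - intros c _. apply is_derive_Reals. apply Derive_correct. apply (HE c).
  - exists z. split; [lra | exact Hz1].
Qed.

Lemma C2_MVT1 (E : R -> R) a b : C2 E -> a < b ->
  exists z, a < z < b /\ Derive E b - Derive E a = Derive (Derive E) z * (b - a).
Proof.
  intros HE Hab. destruct (MVT_cor2 (Derive E) (Derive (Derive E)) a b Hab) as [z [Hz1 Hz2]].
  - intros c _. apply is_derive_Reals. apply Derive_correct. apply (HE c).
  - exists z. split; [lra | exact Hz1].
Qed.

Lemma cont_eps (f : R -> R) x : continuity_pt f x -> forall eps, 0 < eps ->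
  exists alp, 0 < alp /\ forall y, Rabs (y - x) < alp -> Rabs (f y - f x) < eps.
Proof.
  intros Hc eps Heps. destruct (Hc eps Heps) as [alp [Ha H]].
  exists alp. split; [exact Ha|]. intros y Hy.
  destruct (Req_dec y x) as [->|Hne].
  - rewrite Rminus_diag, Rabs_R0; exact Heps.
  - apply (H y). split. { unfold D_x, no_cond. split; auto. }
    exact Hy.
Qed.

Section Main.
Variables (G : Type) (mul : G -> G -> G) (inv : G -> G) (e : G).
Hypothesis HG : is_group mul inv e.
Variables (p q : R).
Hypothesis Hpq : p < q.
Variable psi : G -> R -> R.
Hypothesis Hpsi : hom_to_Diff2 mul p q psi.

Notation I := (in_I p q).

Lemma hom g h x : I x -> psi (mul g h) x = psi g (psi h x).
Proof. intros; apply Hpsi; auto. Qed.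

Lemma maps g x : I x -> I (psi g x).
Proof. intros; destruct Hpsi as [HH _]; destruct (HH g) as [_ [HM1 _]]; auto. Qed.

Lemma incr g x y : I x -> I y -> x < y -> psi g x < psi g y.
Proof. intros; destruct Hpsi as [HH _]; destruct (HH g) as [_ [_ [_ HM1]]]; auto. Qed.

Lemma ext g : exists E, C2 E /\ forall x, I x -> E x = psi g x.
Proof. destruct Hpsi as [HH _]; destruct (HH g) as [[E HE] _]; exists E; exact HE. Qed.

Lemma mono g x y : I x -> I y -> x <= y -> psi g x <= psi g y.
Proof. intros Hx Hy Hxy. destruct (Req_dec x y) as [->|Hne]; [lra|].
  left; apply incr; auto; lra. Qed.

Lemma inj g x y : I x -> I y -> psi g x = psi g y -> x = y.
Proof. intros Hx Hy Hxy. destruct (Rtotal_order x y) as [H|[H|H]]; auto.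
  - pose proof (incr g x y Hx Hy H); lra.
  - pose proof (incr g y x Hy Hx H); lra. Qed.

Lemma psi_e x : I x -> psi e x = x.
Proof. intros Hx. apply (inj e); auto. apply maps; auto.
  rewrite <- hom; auto. destruct HG as [_ [H1 _]]. rewrite H1. auto. Qed.

Lemma inv_l g x : I x -> psi (inv g) (psi g x) = x.
Proof. intros Hx. rewrite <- hom; auto. destruct HG as [_ [_ [_ [H _]]]]. rewrite H. apply psi_e; auto. Qed.

Lemma inv_r g x : I x -> psi g (psi (inv g) x) = x.
Proof. intros Hx. rewrite <- hom; auto. destruct HG as [_ [_ [_ [_ H]]]]. rewrite H. apply psi_e; auto. Qed.

Lemma Ip : I p. Proof. unfold in_I; lra. Qed.
Lemma Iq : I q. Proof. unfold in_I; lra. Qed.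

Lemma cont g : exists E, continuity E /\ forall x, I x -> E x = psi g x.
Proof. destruct (ext g) as [E [HE1 HE2]]. exists E. split; auto. apply C2_cont; auto. Qed.

Lemma ivt g a b y : I a -> I b -> a <= b -> psi g a <= y <= psi g b ->
  exists z, a <= z <= b /\ psi g z = y.
Proof.
  intros Ha Hb Hab Hy. destruct (cont g) as [E [HE1 HE2]].
  destruct (IVT_cor (fun x => E x - y) a b) as [z [Hz1 Hz2]]; auto.
  - apply continuity_minus; auto. apply continuity_const. intros u v; auto.
  - rewrite HE2, HE2; auto. nra.
  - exists z. split; auto. rewrite <- HE2. lra. unfold in_I in *; lra.
Qed.


Fixpoint pw (g : G) (n : nat) : G :=
  match n with O => e | S n => mul g (pw g n) end.

Lemma it_0 g x : I x -> psi (pw g 0) x = x.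
Proof. intros; simpl; apply psi_e; auto. Qed.

Lemma it_S g n x : I x -> psi (pw g (S n)) x = psi g (psi (pw g n) x).
Proof. intros; simpl; apply hom; auto. Qed.

Lemma it_S' g n x : I x -> psi (pw g (S n)) x = psi (pw g n) (psi g x).
Proof.
  revert x; induction n; intros x Hx.
  - rewrite it_S, !it_0; auto. apply maps; auto.
  - rewrite it_S; auto. rewrite IHn; auto. rewrite <- it_S; auto. apply maps; auto.
Qed.

Lemma comm_it f g : (forall y, I y -> psi f (psi g y) = psi g (psi f y)) ->
  forall n y, I y -> psi f (psi (pw g n) y) = psi (pw g n) (psi f y).
Proof.
  intros Hc n; induction n; intros y Hy.
  - rewrite !it_0; auto. apply maps; auto.
  - rewrite !it_S; auto. rewrite Hc, IHn; auto. apply maps; auto. apply maps; auto.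
Qed.

Lemma comm_it2 f g : (forall y, I y -> psi f (psi g y) = psi g (psi f y)) ->
  forall m n y, I y -> psi (pw f m) (psi (pw g n) y) = psi (pw g n) (psi (pw f m) y).
Proof.
  intros Hc m n. apply comm_it. intros y Hy. symmetry. apply comm_it; auto.
  intros z Hz; symmetry; auto.
Qed.

Lemma dlb g E : C2 E -> (forall x, I x -> E x = psi g x) ->
  exists d, 0 < d /\ forall x, I x -> d <= Derive E x.
Proof.
  intros HE HEg. destruct (ext (inv g)) as [H [HH HHg]].
  destruct (continuity_ab_maj (fun x => Rabs (Derive H x)) p q) as [Mx [HM1 HM2]].
  { lra. }
  { intros c _. exact (continuity_pt_comp (Derive H) Rabs c (C2_cont1 H HH c) (Rcontinuity_abs _)). }
  set (M := Rabs (Derive H Mx)).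
  assert (HM0 : 0 <= M) by apply Rabs_pos.
  assert (Key : forall y z, I y -> I z -> y < z -> exists w, y < w < z /\ 1 / (M + 1) < Derive E w).
  { intros y z Hy Hz Hyz. destruct (C2_MVT E y z HE Hyz) as [w [Hw1 Hw2]].
    rewrite !HEg in Hw2; auto.
    pose proof (incr g y z Hy Hz Hyz) as Hgi.
    assert (HE0 : 0 < Derive E w).
    { destruct (Rle_lt_dec (Derive E w) 0); auto. nra. }
    destruct (C2_MVT H (psi g y) (psi g z) HH Hgi) as [w' [Hw'1 Hw'2]].
    rewrite !HHg in Hw'2; try apply maps; auto.
    rewrite !inv_l in Hw'2; auto.
    assert (Hw'I : I w') by (pose proof (maps g y Hy); pose proof (maps g z Hz); unfold in_I in *; lra).
    pose proof (HM1 w' Hw'I) as Hb. fold M in Hb.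
    assert (z - y <= M * (psi g z - psi g y)).
    { rewrite Hw'2. pose proof (Rle_abs (Derive H w')). nra. }
    exists w. split; auto.
    assert (1 <= M * Derive E w) by nra.
    apply Rmult_lt_reg_r with (M + 1); [lra|].
    unfold Rdiv. rewrite Rmult_1_l, Rinv_l by lra. nra. }
  exists (1 / (M + 1)). split. { apply Rdiv_lt_0_compat; lra. }
  intros x Hx. destruct (Rle_lt_dec (1 / (M+1)) (Derive E x)) as [Hl|Hl]; auto.
  exfalso.
  destruct (cont_eps (Derive E) x (C2_cont1 E HE x) (1/(M+1) - Derive E x)) as [alp [Ha Hal]]; [lra|].
  destruct (Rlt_le_dec x q) as [Hxq|Hxq].
  - set (z := Rmin (x + alp/2) q).
    assert (x < z) by (unfold z; apply Rmin_glb_lt; lra).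
    assert (z <= q) by (unfold z; apply Rmin_r).
    assert (z <= x + alp/2) by (unfold z; apply Rmin_l).
    destruct (Key x z) as [w [Hw1 Hw2]]; auto. unfold in_I in *; lra.
    specialize (Hal w). assert (Hwa : Rabs (w - x) < alp) by (rewrite Rabs_pos_eq; lra).
    specialize (Hal Hwa). apply Rabs_def2 in Hal. lra.
  - assert (x = q) by (unfold in_I in *; lra). subst x.
    set (y := Rmax (q - alp/2) p).
    assert (y < q) by (unfold y; apply Rmax_lub_lt; lra).
    assert (p <= y) by (unfold y; apply Rmax_r).
    assert (q - alp/2 <= y) by (unfold y; apply Rmax_l).
    destruct (Key y q) as [w [Hw1 Hw2]]; auto. unfold in_I in *; lra.
    specialize (Hal w). assert (Hwa : Rabs (w - q) < alp) by (rewrite Rabs_left; lra).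
    specialize (Hal Hwa). apply Rabs_def2 in Hal. lra.
Qed.

Lemma d2b E : C2 E -> exists M, 0 <= M /\ forall x, I x -> Rabs (Derive (Derive E) x) <= M.
Proof.
  intros HE.
  destruct (continuity_ab_maj (fun x => Rabs (Derive (Derive E) x)) p q) as [Mx [HM1 HM2]].
  { lra. }
  { intros c _. exact (continuity_pt_comp (Derive (Derive E)) Rabs c (C2_cont2 E HE c) (Rcontinuity_abs _)). }
  exists (Rabs (Derive (Derive E) Mx)). split; auto. apply Rabs_pos.
Qed.

Lemma ratio E d M : C2 E -> 0 < d -> (forall x, I x -> d <= Derive E x) -> 0 <= M ->
  (forall x, I x -> Rabs (Derive (Derive E) x) <= M) ->
  forall a b, I a -> I b -> Derive E a <= Derive E b * exp (M / d * Rabs (a - b)).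
Proof.
  intros HE Hd Hdl HM HMb a b Ha Hb.
  assert (Hmain : Derive E a <= Derive E b + M * Rabs (a - b)).
  { destruct (Rtotal_order a b) as [H|[H|H]].
    - destruct (C2_MVT1 E a b HE H) as [z [Hz1 Hz2]].
      assert (I z) by (unfold in_I in *; lra).
      pose proof (HMb z H0). rewrite Rabs_left by lra.
      pose proof (proj1 (Rabs_le_between _ _) H1). nra.
    - subst. rewrite Rminus_diag, Rabs_R0. lra.
    - destruct (C2_MVT1 E b a HE H) as [z [Hz1 Hz2]].
      assert (I z) by (unfold in_I in *; lra).
      pose proof (HMb z H0). rewrite Rabs_pos_eq by lra.
      pose proof (proj1 (Rabs_le_between _ _) H1). nra. }
  pose proof (Hdl b Hb). pose proof (Rabs_pos (a - b)).
  pose proof (exp_ineq1_le (M / d * Rabs (a - b))).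
  assert (M * Rabs (a - b) <= Derive E b * (M / d * Rabs (a - b))).
  { unfold Rdiv. replace (M * Rabs (a - b)) with (d * (M * / d * Rabs (a - b))) by (field; lra).
    apply Rmult_le_compat_r; auto. apply Rmult_le_pos; auto. apply Rmult_le_pos; auto.
    left; apply Rinv_0_lt_compat; auto. }
  nra.
Qed.


Lemma itI g n x : I x -> I (psi (pw g n) x).
Proof. intros; apply maps; auto. Qed.

Section Dyn.
Variables (g : G) (L c : R).
Hypotheses (HL : I L) (Hc : I c) (HLc : L < c) (HgL : psi g L = L)
  (Hdec : forall s, L < s <= c -> psi g s < s).

Lemma itL n : psi (pw g n) L = L.
Proof. induction n. rewrite it_0; auto. rewrite it_S, IHn; auto. Qed.

Lemma it_gt n s : I s -> L < s -> L < psi (pw g n) s.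
Proof. intros Hs Hls. rewrite <- (itL n) at 1. apply incr; auto. Qed.

Lemma itc n : L < psi (pw g n) c <= c.
Proof.
  induction n.
  - rewrite it_0; auto. lra.
  - rewrite it_S; auto. pose proof (Hdec _ IHn). split; [|lra].
    rewrite <- HgL. apply incr; auto. apply itI; auto. lra.
Qed.

Lemma itc_S n : psi (pw g (S n)) c < psi (pw g n) c.
Proof. rewrite it_S; auto. apply Hdec. apply itc. Qed.

Lemma it_range n z : psi g c <= z <= c ->
  psi (pw g (S n)) c <= psi (pw g n) z <= psi (pw g n) c.
Proof.
  intros Hz. assert (I (psi g c)) by (apply maps; auto).
  assert (I z) by (unfold in_I in *; lra).
  rewrite it_S'; auto. split; apply mono; auto; lra.
Qed.

Lemma distort E d M : C2 E -> (forall x, I x -> E x = psi g x) -> 0 < d ->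
  (forall x, I x -> d <= Derive E x) -> 0 <= M ->
  (forall x, I x -> Rabs (Derive (Derive E) x) <= M) ->
  forall n y1 y2 z1 z2, psi g c <= y1 -> y1 < y2 -> y2 <= c ->
    psi g c <= z1 -> z1 < z2 -> z2 <= c ->
    (psi (pw g n) z2 - psi (pw g n) z1) * (y2 - y1) <=
    exp (M / d * (c - psi (pw g n) c)) * (z2 - z1) * (psi (pw g n) y2 - psi (pw g n) y1).
Proof.
  intros HE HEg Hd Hdl HM HMb n. induction n; intros y1 y2 z1 z2 Hy1 Hy12 Hy2 Hz1 Hz12 Hz2.
  - assert (I (psi g c)) by (apply maps; auto).
    rewrite !it_0; try (unfold in_I in *; lra). rewrite Rminus_diag, Rmult_0_r, exp_0. lra.
  - specialize (IHn y1 y2 z1 z2 Hy1 Hy12 Hy2 Hz1 Hz12 Hz2).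
    assert (I (psi g c)) by (apply maps; auto).
    assert (Iy1 : I y1) by (unfold in_I in *; lra).
    assert (Iy2 : I y2) by (unfold in_I in *; lra).
    assert (Iz1 : I z1) by (unfold in_I in *; lra).
    assert (Iz2 : I z2) by (unfold in_I in *; lra).
    set (a1 := psi (pw g n) z1) in *. set (a2 := psi (pw g n) z2) in *.
    set (b1 := psi (pw g n) y1) in *. set (b2 := psi (pw g n) y2) in *.
    assert (Ha : a1 < a2) by (apply incr; auto).
    assert (Hb : b1 < b2) by (apply incr; auto).
    pose proof (it_range n z1 (conj Hz1 (Rlt_le _ _ (Rlt_le_trans _ _ _ Hz12 Hz2)))) as Ra1.
    pose proof (it_range n z2 (conj (Rle_trans _ _ _ Hz1 (Rlt_le _ _ Hz12)) Hz2)) as Ra2.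
    pose proof (it_range n y1 (conj Hy1 (Rlt_le _ _ (Rlt_le_trans _ _ _ Hy12 Hy2)))) as Rb1.
    pose proof (it_range n y2 (conj (Rle_trans _ _ _ Hy1 (Rlt_le _ _ Hy12)) Hy2)) as Rb2.
    fold a1 a2 b1 b2 in Ra1, Ra2, Rb1, Rb2.
    pose proof (itc (S n)) as HcS. pose proof (itc n) as Hcn.
    set (cS := psi (pw g (S n)) c) in *. set (cn := psi (pw g n) c) in *.
    rewrite !it_S; auto. fold a1 a2 b1 b2.
    assert (Ia1 : I a1) by (apply itI; auto). assert (Ia2 : I a2) by (apply itI; auto).
    assert (Ib1 : I b1) by (apply itI; auto). assert (Ib2 : I b2) by (apply itI; auto).
    rewrite <- (HEg a1), <- (HEg a2), <- (HEg b1), <- (HEg b2); auto.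
    destruct (C2_MVT E a1 a2 HE Ha) as [w1 [Hw1 Ew1]].
    destruct (C2_MVT E b1 b2 HE Hb) as [w2 [Hw2 Ew2]].
    rewrite Ew1, Ew2.
    assert (Iw1 : I w1) by (unfold in_I in *; lra).
    assert (Iw2 : I w2) by (unfold in_I in *; lra).
    pose proof (ratio E d M HE Hd Hdl HM HMb w1 w2 Iw1 Iw2) as Hr.
    assert (Habs : Rabs (w1 - w2) <= cn - cS) by (apply Rabs_le; lra).
    assert (HC : 0 <= M / d) by (apply Rdiv_le_0_compat; lra).
    assert (Hex : exp (M / d * Rabs (w1 - w2)) <= exp (M / d * (cn - cS))).
    { destruct (Req_dec (M / d * Rabs (w1 - w2)) (M / d * (cn - cS))) as [Heq|Hne].
      rewrite Heq; lra. left; apply exp_increasing.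
      assert (M / d * Rabs (w1 - w2) <= M / d * (cn - cS)) by (apply Rmult_le_compat_l; auto). lra. }
    assert (Hsplit : exp (M / d * (c - cS)) = exp (M / d * (cn - cS)) * exp (M / d * (c - cn))).
    { rewrite <- exp_plus. f_equal. ring. }
    rewrite Hsplit.
    pose proof (Hdl w1 Iw1). pose proof (Hdl w2 Iw2).
    set (X := exp (M / d * (cn - cS))) in *. set (Y := exp (M / d * (c - cn))) in *.
    set (Z := exp (M / d * Rabs (w1 - w2))) in *.
    assert (HX : 0 < X) by apply exp_pos. assert (HY : 0 < Y) by apply exp_pos.
    assert (Step1 : Derive E w1 * (a2 - a1) * (y2 - y1) <= Derive E w1 * (Y * (z2 - z1) * (b2 - b1))).
    { rewrite Rmult_assoc. apply Rmult_le_compat_l; lra. }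
    assert (Step2 : Derive E w1 <= Derive E w2 * X).
    { apply Rle_trans with (Derive E w2 * Z); auto. apply Rmult_le_compat_l; lra. }
    assert (0 <= Y * (z2 - z1) * (b2 - b1)) by (apply Rmult_le_pos; [apply Rmult_le_pos|]; lra).
    assert (Step3 : Derive E w1 * (Y * (z2 - z1) * (b2 - b1)) <= Derive E w2 * X * (Y * (z2 - z1) * (b2 - b1))).
    { apply Rmult_le_compat_r; auto. }
    replace (X * Y * (z2 - z1) * (Derive E w2 * (b2 - b1))) with (Derive E w2 * X * (Y * (z2 - z1) * (b2 - b1))) by ring.
    lra.
Qed.


Lemma KC (f : G) (x : R) :
  (forall y, I y -> psi f (psi g y) = psi g (psi f y)) ->
  (forall eps, 0 < eps -> exists N, forall n, (N <= n)%nat -> psi (pw g n) c < L + eps) ->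
  psi f c = c -> psi g c < x -> x < c -> x < psi f x -> False.
Proof.
  intros Hcomm Hconv Hfc Hx1 Hx2 Hfx.
  assert (Igc : I (psi g c)) by (apply maps; auto).
  assert (Ix : I x) by (unfold in_I in *; lra).
  destruct (ext g) as [E [HE HEg]].
  destruct (dlb g E HE HEg) as [d [Hd Hdl]].
  destruct (d2b E HE) as [M [HM HMb]].
  set (C := M / d).
  assert (HC : 0 <= C) by (apply Rdiv_le_0_compat; lra).
  set (xs := fun m => psi (pw f m) x).
  assert (Hxs : forall m, x <= xs m < c).
  { induction m; unfold xs in *.
    - rewrite it_0; auto; lra.
    - rewrite it_S; auto. assert (I (psi (pw f m) x)) by (apply itI; auto).
      split.
      + apply Rle_trans with (psi f x); [lra|]. apply mono; auto. lra.
      + rewrite <- Hfc. apply incr; auto. lra. }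
  assert (Hxs2 : forall m, xs m < xs (S m)).
  { induction m; unfold xs in *.
    - rewrite it_S, it_0; auto.
    - rewrite (it_S f (S m)); auto. rewrite (it_S f m); auto. apply incr; auto.
      apply itI; auto. apply maps; apply itI; auto. rewrite <- it_S; auto. }
  set (K0 := psi f x - x).
  assert (HK0 : 0 < K0) by (unfold K0; lra).
  set (Q := exp (C * (c - L))).
  assert (HQ : 0 < Q) by apply exp_pos.
  set (eta := K0 / (4 * Q)).
  assert (Heta : 0 < eta) by (apply Rdiv_lt_0_compat; lra).
  assert (Hm : exists m, xs (S m) - xs m < eta).
  { apply NNPP. intros Hn.
    assert (Hall : forall m, eta <= xs (S m) - xs m).
    { intros m. apply Rnot_lt_le. intros Hc'. apply Hn. exists m; auto. }
    assert (Hsum : forall m, x + INR m * eta <= xs m).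
    { induction m.
      - unfold xs; rewrite it_0; auto; simpl; lra.
      - rewrite S_INR. specialize (Hall m). lra. }
    destruct (INR_unbounded ((c - x) / eta)) as [N HN].
    specialize (Hsum N). specialize (Hxs N).
    assert (INR N * eta > c - x).
    { apply Rmult_gt_compat_r with (r := eta) in HN; auto.
      unfold Rdiv in HN. rewrite Rmult_assoc, Rinv_l, Rmult_1_r in HN by lra. lra. }
    lra. }
  destruct Hm as [m Hm].
  destruct (ext (pw f m)) as [Em [HEm HEmg]].
  destruct (cont_eps (Derive Em) L (C2_cont1 Em HEm L) (1/4)) as [alp [Halp Hal]]; [lra|].
  destruct (Hconv alp Halp) as [N HN].
  set (cn := psi (pw g N) c). set (cS := psi (pw g (S N)) c).
  pose proof (itc N) as Hcn. pose proof (itc (S N)) as HcS. pose proof (itc_S N) as HcSn.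
  fold cn cS in Hcn, HcS, HcSn.
  assert (HcnL : cn < L + alp) by (apply HN; lia).
  assert (Icn : I cn) by (apply itI; auto). assert (IcS : I cS) by (apply itI; auto).
  (* derivative of Em is 1 somewhere near L *)
  assert (Hfix : forall k, psi (pw f m) (psi (pw g k) c) = psi (pw g k) c).
  { intros k. rewrite comm_it2; auto. f_equal.
    clear -Hfc Hc HG Hpsi. induction m. rewrite it_0; auto. rewrite it_S, IHm; auto. }
  destruct (C2_MVT Em cS cn HEm HcSn) as [z [Hz1 Hz2]].
  rewrite !HEmg in Hz2; auto. unfold cn, cS in Hz2. rewrite !Hfix in Hz2. fold cn cS in Hz2.
  assert (Hz1' : Derive Em z = 1).
  { apply Rmult_eq_reg_r with (cn - cS); lra. }
  assert (HDL : 3/4 < Derive Em L).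
  { assert (Rabs (z - L) < alp) by (apply Rabs_def1; lra).
    specialize (Hal z H). rewrite Hz1' in Hal. apply Rabs_def2 in Hal. lra. }
  set (u1 := psi (pw g N) x). set (u2 := psi (pw g N) (psi f x)).
  assert (Ifx : I (psi f x)) by (apply maps; auto).
  assert (Hu : u1 < u2) by (apply incr; auto).
  assert (HLgc : L < psi g c) by (rewrite <- HgL; apply incr; auto).
  assert (Hu1 : L < u1) by (apply it_gt; auto; lra).
  assert (Hu2 : u2 <= cn).
  { apply mono; auto. rewrite <- Hfc. left; apply incr; auto; lra. }
  assert (Iu1 : I u1) by (apply itI; auto). assert (Iu2 : I u2) by (apply itI; auto).
  destruct (C2_MVT Em u1 u2 HEm Hu) as [w [Hw1 Hw2]].
  assert (HDw : 1/2 < Derive Em w).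
  { assert (Rabs (w - L) < alp) by (apply Rabs_def1; lra).
    specialize (Hal w H). apply Rabs_def2 in Hal. lra. }
  rewrite !HEmg in Hw2; auto.
  unfold u1, u2 in Hw2. rewrite (comm_it2 f g Hcomm m N x Ix), (comm_it2 f g Hcomm m N (psi f x) Ifx) in Hw2.
  assert (Hxs1 : psi (pw f m) (psi f x) = xs (S m)).
  { unfold xs. rewrite it_S'; auto. }
  assert (Hxs0 : psi (pw f m) x = xs m) by reflexivity.
  rewrite Hxs1, Hxs0 in Hw2. fold u1 u2 in Hw2.
  pose proof (distort E d M HE HEg Hd Hdl HM HMb N x (psi f x) (xs m) (xs (S m))) as Hdist.
  assert (Hfxc : psi f x <= c) by (rewrite <- Hfc; apply mono; auto; lra).
  specialize (Hdist (Rlt_le _ _ Hx1) Hfx Hfxc).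
  assert (psi g c <= xs m) by (pose proof (Hxs m); lra).
  specialize (Hdist H (Hxs2 m) (Rlt_le _ _ (proj2 (Hxs (S m))))).
  fold u1 u2 cn in Hdist. fold C in Hdist.
  assert (HexpQ : exp (C * (c - cn)) <= Q).
  { unfold Q. destruct (Req_dec (C * (c - cn)) (C * (c - L))) as [Heq|Hne].
    rewrite Heq; lra. left; apply exp_increasing.
    assert (C * (c - cn) <= C * (c - L)) by (apply Rmult_le_compat_l; lra). lra. }
  set (Dm := xs (S m) - xs m) in *.
  assert (Hlow : (1/2) * (u2 - u1) < psi (pw g N) (xs (S m)) - psi (pw g N) (xs m)).
  { rewrite Hw2. apply Rmult_lt_compat_r; lra. }
  assert (Hp : 0 < exp (C * (c - cn))) by apply exp_pos.
  assert (H1 : (1/2) * (u2 - u1) * K0 < exp (C * (c - cn)) * Dm * (u2 - u1)).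
  { apply Rlt_le_trans with ((psi (pw g N) (xs (S m)) - psi (pw g N) (xs m)) * K0).
    - apply Rmult_lt_compat_r; lra.
    - unfold K0. exact Hdist. }
  assert (H2 : exp (C * (c - cn)) * Dm <= Q * eta).
  { apply Rmult_le_compat; try lra. unfold Dm; pose proof (Hxs2 m); lra. }
  assert (H3 : Q * eta = K0 / 4) by (unfold eta; field; lra).
  assert (H4 : exp (C * (c - cn)) * Dm * (u2 - u1) <= K0 / 4 * (u2 - u1)).
  { rewrite <- H3. apply Rmult_le_compat_r; lra. }
  nra.
Qed.


Lemma comm_inv a b : (forall y, I y -> psi a (psi b y) = psi b (psi a y)) ->
  (forall y, I y -> psi (inv a) (psi b y) = psi b (psi (inv a) y)).
Proof.
  intros Hcm y Hy. apply (inj a); try apply maps; try apply maps; auto.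
  rewrite inv_r by (apply maps; auto). rewrite Hcm by (apply maps; auto). rewrite inv_r; auto.
Qed.

Lemma KCW (f : G) :
  (forall y, I y -> psi f (psi g y) = psi g (psi f y)) ->
  (forall eps, 0 < eps -> exists N, forall n, (N <= n)%nat -> psi (pw g n) c < L + eps) ->
  psi f c = c -> forall s, L < s <= c -> psi f s = s.
Proof.
  intros Hcomm Hconv Hfc.
  assert (Igc : I (psi g c)) by (apply maps; auto).
  assert (HLgc : L < psi g c) by (rewrite <- HgL; apply incr; auto).
  assert (Hgcc : psi g c < c) by (apply Hdec; lra).
  assert (Step1 : forall x, psi g c <= x <= c -> psi f x = x).
  { intros x Hx. assert (Ix : I x) by (unfold in_I in *; lra).
    destruct (Req_dec x c) as [->|Hxc]; auto.
    destruct (Req_dec x (psi g c)) as [->|Hxg].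
    { rewrite Hcomm, Hfc; auto. }
    destruct (Rtotal_order x (psi f x)) as [Hl|[Heq|Hl]]; auto.
    - exfalso. apply (KC f x); auto; lra.
    - exfalso. apply (KC (inv f) x); auto.
      + apply comm_inv; auto.
      + rewrite <- Hfc at 1. apply inv_l; auto.
      + lra. + lra.
      + destruct (Rlt_le_dec x (psi (inv f) x)) as [H|H]; auto.
        assert (Ii : I (psi (inv f) x)) by (apply maps; auto).
        pose proof (mono f _ _ Ii Ix H). rewrite inv_r in H0; auto. lra. }
  assert (Step2 : forall n s, psi (pw g n) c <= s <= c -> psi f s = s).
  { induction n; intros s Hs.
    - rewrite it_0 in Hs; auto. assert (s = c) by lra. subst; auto.
    - destruct (Rle_lt_dec (psi g c) s) as [H|H].
      + apply Step1; lra.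
      + pose proof (itc (S n)) as HcS. pose proof (itc n) as Hcn.
        assert (Is : I s) by (unfold in_I in *; lra).
        set (s' := psi (inv g) s).
        assert (Is' : I s') by (apply maps; auto).
        assert (Hgs' : psi g s' = s) by (apply inv_r; auto).
        assert (Hs'1 : psi (pw g n) c <= s').
        { destruct (Rle_lt_dec (psi (pw g n) c) s') as [H1|H1]; auto.
          assert (I (psi (pw g n) c)) by (apply itI; auto).
          pose proof (incr g _ _ Is' H0 H1). rewrite <- it_S in H2; auto. lra. }
        assert (Hs'2 : s' <= c).
        { destruct (Rle_lt_dec s' c) as [H1|H1]; auto.
          pose proof (incr g _ _ Hc Is' H1). lra. }
        rewrite <- Hgs'. rewrite Hcomm; auto. rewrite (IHn s'); auto. }
  intros s Hs. destruct (Hconv (s - L)) as [N HN]; [lra|].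
  specialize (HN N (le_n N)). apply (Step2 N). lra.
Qed.

End Dyn.

Lemma itfix g L n : I L -> psi g L = L -> psi (pw g n) L = L.
Proof. intros HL HgL. induction n. rewrite it_0; auto. rewrite it_S, IHn; auto. Qed.

Lemma DEC g y : I y -> psi g y < y ->
  exists L, I L /\ L < y /\ psi g L = L /\ (forall s, L < s <= y -> psi g s < s) /\
  (forall eps, 0 < eps -> exists N, forall n, (N <= n)%nat -> psi (pw g n) y < L + eps) /\
  (forall n, L <= psi (pw g n) y).
Proof.
  intros Hy Hgy. set (u := fun n => psi (pw g n) y).
  assert (Iu : forall n, I (u n)) by (intros; apply itI; auto).
  assert (Hdecr : forall n, u (S n) < u n).
  { induction n; unfold u in *.
    - rewrite it_S, it_0; auto.
    - rewrite (it_S g (S n)); auto. rewrite (it_S g n); auto. apply incr; auto.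
      apply maps; auto. rewrite <- it_S; auto. }
  destruct (decreasing_cv u) as [L HL].
  { intros n. left; apply Hdecr. }
  { exists (- p). intros x [i ->]. unfold opp_seq. specialize (Iu i). unfold in_I in Iu. lra. }
  assert (HLu : forall n, L <= u n) by (apply decreasing_ineq; auto; intros n; left; apply Hdecr).
  assert (Hlow : forall r, (forall n, r <= u n) -> r <= L).
  { intros r Hr. destruct (Rle_lt_dec r L) as [H|H]; auto. exfalso.
    destruct (HL (r - L)) as [N HN]; [lra|]. specialize (HN N (le_n N)). specialize (Hr N).
    unfold R_dist in HN. apply Rabs_def2 in HN. lra. }
  assert (ILL : I L).
  { split. apply Hlow. intros n. apply (Iu n). specialize (HLu 0%nat). specialize (Iu 0%nat).
    unfold in_I in *; lra. }
  destruct (cont g) as [E [HE HEg]].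
  assert (HgL : psi g L = L).
  { rewrite <- HEg; auto. apply UL_sequence with (fun n => E (u n)).
    - apply continuity_seq; auto.
    - intros eps Heps. destruct (HL eps Heps) as [N HN]. exists N. intros n Hn.
      rewrite HEg; auto. unfold u. rewrite <- it_S; auto. apply HN. lia. }
  assert (HLy : L < y).
  { specialize (HLu 1%nat). specialize (Hdecr 0%nat). unfold u in *. rewrite it_0 in Hdecr; auto. lra. }
  exists L. split; auto. split; auto. split; auto. split; [|split].
  - intros s Hs. destruct (Rlt_le_dec (psi g s) s) as [H|H]; auto. exfalso.
    assert (Is : I s) by (unfold in_I in *; lra).
    assert (Hr : exists r, s <= r <= y /\ psi g r = r).
    { destruct (IVT_cor (fun t => E t - t) s y) as [r [Hr1 Hr2]].
      - apply continuity_minus; auto. apply derivable_continuous; apply derivable_id.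
      - lra.
      - rewrite !HEg; auto. assert (0 <= psi g s - s) by lra. assert (psi g y - y < 0) by lra. nra.
      - exists r. split; auto. rewrite <- HEg. lra. unfold in_I in *; lra. }
    destruct Hr as [r [Hr1 Hr2]].
    assert (Ir : I r) by (unfold in_I in *; lra).
    assert (forall n, r <= u n).
    { induction n; unfold u in *. rewrite it_0; auto; lra.
      rewrite it_S; auto. rewrite <- Hr2 at 1. apply mono; auto. }
    pose proof (Hlow r H0). lra.
  - intros eps Heps. destruct (HL eps Heps) as [N HN]. exists N. intros n Hn.
    specialize (HN n Hn). unfold R_dist in HN. apply Rabs_def2 in HN. unfold u in HN. lra.
  - exact HLu.
Qed.

Lemma KOP' f g c t : (forall y, I y -> psi f (psi g y) = psi g (psi f y)) ->
  I c -> I t -> psi f c = c -> psi g c < c ->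
  (forall s, Rmin c t <= s <= Rmax c t -> psi g s <> s) -> psi f t = t.
Proof.
  intros Hcomm Ic It Hfc Hgc Hnf.
  destruct (DEC g c Ic Hgc) as [L [IL [HLc [HgL [Hdec [Hconv _]]]]]].
  pose proof (KCW g L c IL Ic HLc HgL Hdec f Hcomm Hconv Hfc) as Hid.
  destruct (Rle_lt_dec t c) as [Htc|Htc].
  - apply Hid. split; auto. destruct (Rle_lt_dec t L) as [H|H]; auto. exfalso.
    apply (Hnf L); auto. rewrite Rmin_right, Rmax_left by lra. lra.
  - assert (Hgt : psi g t < t).
    { destruct (Rlt_le_dec (psi g t) t) as [H|H]; auto. exfalso.
      destruct (cont g) as [E [HE HEg]].
      destruct (IVT_cor (fun s => E s - s) c t) as [r [Hr1 Hr2]].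
      - apply continuity_minus; auto. apply derivable_continuous; apply derivable_id.
      - lra.
      - rewrite !HEg; auto. assert (psi g c - c < 0) by lra. assert (0 <= psi g t - t) by lra. nra.
      - apply (Hnf r). rewrite Rmin_left, Rmax_right by lra. lra.
        rewrite <- HEg. lra. unfold in_I in *; lra. }
    destruct (DEC g t It Hgt) as [L2 [IL2 [HL2t [HgL2 [_ [Hconv2 _]]]]]].
    assert (HL2c : L2 < c).
    { destruct (Rlt_le_dec L2 c) as [H|H]; auto. exfalso. apply (Hnf L2); auto.
      rewrite Rmin_left, Rmax_right by lra. lra. }
    destruct (Hconv2 (c - L2)) as [N HN]; [lra|]. specialize (HN N (le_n N)).
    assert (HLt : L < psi (pw g N) t).
    { rewrite <- (itfix g L N) at 1; auto. apply incr; auto. lra. }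
    assert (Hfix : psi f (psi (pw g N) t) = psi (pw g N) t) by (apply Hid; lra).
    rewrite comm_it in Hfix; auto. apply (inj (pw g N)); auto. apply maps; auto.
Qed.

Lemma KOP f g c t : (forall y, I y -> psi f (psi g y) = psi g (psi f y)) ->
  I c -> I t -> psi f c = c ->
  (forall s, Rmin c t <= s <= Rmax c t -> psi g s <> s) -> psi f t = t.
Proof.
  intros Hcomm Ic It Hfc Hnf.
  assert (Hgc : psi g c <> c) by (apply Hnf; split; [apply Rmin_l | apply Rmax_l]).
  destruct (Rtotal_order (psi g c) c) as [H|[H|H]].
  - apply (KOP' f g c t); auto.
  - contradiction.
  - apply (KOP' f (inv g) c t); auto.
    + intros y Hy. symmetry. apply comm_inv; auto. intros z Hz; symmetry; auto.
    + rewrite <- (inv_l g c Ic) at 2. apply incr; auto. apply maps; auto.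
    + intros s Hs Heq. apply (Hnf s Hs).
      assert (Is : I s).
      { unfold in_I in *. split.
        apply Rle_trans with (Rmin c t); [apply Rmin_glb; lra | lra].
        apply Rle_trans with (Rmax c t); [lra | apply Rmax_lub; lra]. }
      rewrite <- Heq at 1. apply inv_r; auto.
Qed.


Lemma commF a b : mul a b = mul b a -> forall z, I z -> psi a (psi b z) = psi b (psi a z).
Proof. intros H z Hz. rewrite <- !hom; auto. rewrite H; auto. Qed.

Lemma braidF a b : mul a (mul b a) = mul b (mul a b) ->
  forall z, I z -> psi a (psi b (psi a z)) = psi b (psi a (psi b z)).
Proof. intros H z Hz. rewrite <- (hom b a), <- (hom a (mul b a)), <- (hom a b), <- (hom b (mul a b)); auto;
  try (apply maps; auto). rewrite H; auto. Qed.

Ltac mm := unfold Rmin, Rmax in *; repeat (destruct (Rle_dec _ _)); lra.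

Lemma OT0 f g h t : mul f g = mul g f -> mul f h = mul h f ->
  mul g (mul h g) = mul h (mul g h) -> I t -> psi f t <> t -> psi g t < psi h t -> False.
Proof.
  intros Hfg Hfh Hbr It Hft Hlt.
  pose proof (commF f g Hfg) as Cfg. pose proof (commF f h Hfh) as Cfh.
  pose proof (braidF g h Hbr) as B.
  set (D := mul g (mul h g)).
  assert (HD : forall y, I y -> psi D y = psi g (psi h (psi g y))).
  { intros y Hy. unfold D. rewrite !hom; auto; try (apply maps; auto). }
  assert (CfD : forall y, I y -> psi f (psi D y) = psi D (psi f y)).
  { intros y Hy. rewrite !HD; auto; try (apply maps; auto).
    rewrite Cfg, Cfh, Cfg; auto; repeat (apply maps); auto. }
  set (r := psi (inv D) t).
  assert (Ir : I r) by (apply maps; auto).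
  assert (HDr : psi D r = t) by (apply inv_r; auto).
  assert (StepA : forall s, Rmin t r <= s <= Rmax t r -> psi f s <> s).
  { intros s Hs Hfs.
    assert (Is : I s) by (unfold in_I in *; mm).
    assert (Hd : exists d, Rmin s t <= d <= Rmax s t /\ psi D d = d).
    { apply NNPP. intros Hn. apply Hft. apply (KOP f D s t); auto.
      intros u Hu Heq. apply Hn. exists u; auto. }
    destruct Hd as [d [Hd1 Hd2]].
    assert (Id : I d) by (unfold in_I in *; mm).
    assert (Hdt : d = t /\ r = t).
    { destruct (Rle_dec t r) as [Htr|Htr].
      - assert (d <= r) by mm. assert (t <= d) by mm.
        pose proof (mono D d r Id Ir H). rewrite Hd2, HDr in H1.
        assert (d = t) by lra. subst d. split; auto.
        apply (inj D); auto. congruence.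
      - assert (r <= d) by mm. assert (d <= t) by mm.
        pose proof (mono D r d Ir Id H). rewrite Hd2, HDr in H1.
        assert (d = t) by lra. subst d. split; auto.
        apply (inj D); auto. congruence. }
    destruct Hdt as [-> ->]. assert (s = t) by mm. subst s. auto. }
  set (phi := mul (inv h) g).
  assert (Hphi : forall y, I y -> psi phi y = psi (inv h) (psi g y)).
  { intros y Hy; unfold phi; rewrite hom; auto. }
  assert (Cphif : forall y, I y -> psi phi (psi f y) = psi f (psi phi y)).
  { intros y Hy. rewrite !Hphi; auto; try (apply maps; auto).
    rewrite <- Cfg; auto. rewrite (comm_inv h f (fun z Hz => eq_sym (Cfh z Hz))); auto. apply maps; auto. }
  assert (StepB : forall s, Rmin t r <= s <= Rmax t r -> psi g s <> psi h s).
  { intros s Hs Heq.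
    assert (Is : I s) by (unfold in_I in *; mm).
    assert (psi phi t = t).
    { apply (KOP phi f s t); auto.
      - rewrite Hphi, Heq, inv_l; auto.
      - intros u Hu. apply StepA. mm. }
    rewrite Hphi in H; auto. apply (f_equal (psi h)) in H. rewrite inv_r in H; [|apply maps; auto]. lra. }
  assert (StepC : psi g r < psi h r).
  { destruct (Rtotal_order (psi g r) (psi h r)) as [H|[H|H]]; auto.
    - exfalso; apply (StepB r); auto; mm.
    - exfalso. destruct (cont g) as [Eg [HEg1 HEg2]]. destruct (cont h) as [Eh [HEh1 HEh2]].
      destruct (IVT_cor (fun s => Eg s - Eh s) (Rmin t r) (Rmax t r)) as [z [Hz1 Hz2]].
      + apply continuity_minus; auto.
      + mm.
      + assert (Hmin : Rmin t r = t \/ Rmin t r = r) by mm.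
        assert (Hmax : Rmax t r = t \/ Rmax t r = r) by mm.
        assert (Hmm : Rmin t r = t /\ Rmax t r = r \/ Rmin t r = r /\ Rmax t r = t) by mm.
        destruct Hmm as [[-> ->]|[-> ->]]; rewrite !HEg2, !HEh2; auto; nra.
      + apply (StepB z); auto. assert (Iz : I z) by (unfold in_I in *; mm).
        rewrite <- HEg2, <- HEh2; auto. lra. }
  pose proof (incr D _ _ (maps g r Ir) (maps h r Ir) StepC) as Hm.
  rewrite !HD in Hm; try (apply maps; auto).
  rewrite B in Hm by (apply maps; auto).
  rewrite <- (B r Ir) in Hm.
  rewrite <- HD in Hm; auto. rewrite HDr in Hm. lra.
Qed.

Lemma OT f g h t : mul f g = mul g f -> mul f h = mul h f ->
  mul g (mul h g) = mul h (mul g h) -> I t -> psi f t <> t -> psi g t = psi h t.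
Proof.
  intros Hfg Hfh Hbr It Hft.
  destruct (Rtotal_order (psi g t) (psi h t)) as [H|[H|H]]; auto.
  - exfalso; apply (OT0 f g h t); auto.
  - exfalso; apply (OT0 f h g t); auto.
Qed.


Definition Wset y t s := I s /\ forall u, Rmin t s <= u <= Rmax t s -> psi y u <> u.

Lemma W_t y t : I t -> psi y t <> t -> Wset y t t.
Proof. intros It Hy. split; auto. intros u Hu. assert (u = t) by mm. subst; auto. Qed.

Lemma W_self y t s : Wset y t s -> psi y s <> s.
Proof. intros [Is H]. apply H. mm. Qed.

Lemma W_conv y t s1 s2 u : Wset y t s1 -> Wset y t s2 -> Rmin s1 s2 <= u <= Rmax s1 s2 -> Wset y t u.
Proof.
  intros [I1 H1] [I2 H2] Hu. split. unfold in_I in *; mm.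
  intros v Hv. destruct (Rle_dec t u) as [Htu|Htu].
  - destruct (Rle_dec s1 s2) as [Hs|Hs].
    + apply H2; mm.
    + apply H1; mm.
  - destruct (Rle_dec s1 s2) as [Hs|Hs].
    + apply H1; mm.
    + apply H2; mm.
Qed.

Lemma W_inv y t s : I t -> Wset y t s -> Wset y t (psi y s).
Proof.
  intros It [Is H]. assert (Hs : psi y s <> s) by (apply H; mm).
  split. apply maps; auto.
  intros u Hu Hfix.
  assert (Iu : I u).
  { pose proof (maps y s Is). unfold in_I in *. split.
    apply Rle_trans with (Rmin t (psi y s)); [apply Rmin_glb; lra | lra].
    apply Rle_trans with (Rmax t (psi y s)); [lra | apply Rmax_lub; lra]. }
  assert (Hnot : ~ (Rmin t s <= u <= Rmax t s)) by (intros Hc; apply (H u Hc); auto).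
  assert (A1 : u < s -> u < psi y s).
  { intros Hl. pose proof (incr y u s Iu Is Hl). lra. }
  assert (A2 : s < u -> psi y s < u).
  { intros Hl. pose proof (incr y s u Is Iu Hl). lra. }
  destruct (Rtotal_order u s) as [Hl|[He|Hl]].
  - specialize (A1 Hl). apply Hnot. mm.
  - apply Hnot. mm.
  - specialize (A2 Hl). apply Hnot. mm.
Qed.

Lemma KOPW f y t s : (forall z, I z -> psi f (psi y z) = psi y (psi f z)) ->
  I t -> psi f t = t -> Wset y t s -> psi f s = s.
Proof. intros Hc It Hft [Is H]. apply (KOP f y t s); auto. Qed.

Lemma IdSpread u v y t s0 : (forall z, I z -> psi u (psi v (psi u z)) = psi v (psi u (psi v z))) ->
  (forall s, Wset y t s -> psi v s = s) -> Wset y t s0 -> psi u s0 = s0 ->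
  forall s, Wset y t s -> psi u s = s.
Proof.
  intros B Hv Hs0 Hus0.
  assert (First : forall s, Wset y t s -> Wset y t (psi u s) -> psi u s = s).
  { intros s Ws Wus. pose proof (proj1 Ws) as Is.
    pose proof (B s Is) as Bs. rewrite (Hv s Ws), (Hv _ Wus) in Bs.
    apply (inj u); auto. apply maps; auto. }
  intros s Ws. pose proof (proj1 Ws) as Is. pose proof (proj1 Hs0) as Is0.
  destruct (Req_dec (psi u s) s) as [Heq|Hne]; auto. exfalso.
  destruct (Rtotal_order s0 s) as [Hl|[He|Hl]].
  - destruct (Rtotal_order (psi u s) s) as [H1|[H1|H1]]; [|contradiction|].
    + assert (psi u s0 < psi u s) by (apply incr; auto). 
      apply Hne, First; auto. apply (W_conv y t s0 s); auto. mm.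
    + destruct (ivt u s0 s s Is0 Is (Rlt_le _ _ Hl)) as [w [Hw1 Hw2]]; [lra|].
      assert (Ww : Wset y t w) by (apply (W_conv y t s0 s); auto; mm).
      assert (psi u w = w) by (apply First; auto; rewrite Hw2; auto).
      assert (w = s) by lra. subst w. contradiction.
  - subst. contradiction.
  - destruct (Rtotal_order (psi u s) s) as [H1|[H1|H1]]; [|contradiction|].
    + destruct (ivt u s s0 s Is Is0 (Rlt_le _ _ Hl)) as [w [Hw1 Hw2]]; [lra|].
      assert (Ww : Wset y t w) by (apply (W_conv y t s s0); auto; mm).
      assert (psi u w = w) by (apply First; auto; rewrite Hw2; auto).
      assert (w = s) by lra. subst w. contradiction.
    + assert (psi u s < psi u s0) by (apply incr; auto).
      apply Hne, First; auto. apply (W_conv y t s s0); auto. mm.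
Qed.

Lemma Collapse y z t : (forall w, I w -> psi y (psi z (psi y w)) = psi z (psi y (psi z w))) ->
  I t -> psi y t <> t -> (forall s, Wset y t s -> psi z s = s) -> False.
Proof.
  intros B It Hyt Hz.
  pose proof (W_t y t It Hyt) as Wt. pose proof (W_inv y t t It Wt) as Wyt.
  pose proof (B t It) as Bt. rewrite (Hz t Wt), (Hz _ Wyt) in Bt.
  apply Hyt. apply (inj y); auto. apply maps; auto.
Qed.

Lemma chain4 x1 x2 x3 x4 :
  mul x1 x3 = mul x3 x1 -> mul x1 x4 = mul x4 x1 -> mul x2 x4 = mul x4 x2 ->
  mul x1 (mul x2 x1) = mul x2 (mul x1 x2) ->
  mul x2 (mul x3 x2) = mul x3 (mul x2 x3) ->
  mul x3 (mul x4 x3) = mul x4 (mul x3 x4) ->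
  forall t, I t -> psi x1 t = psi x2 t.
Proof.
  intros c13 c14 c24 b12 b23 b34 t It.
  assert (E3 : forall s, I s -> psi x1 s <> s -> psi x3 s = psi x4 s).
  { intros s Is Hs. apply (OT x1 x3 x4 s); auto. }
  destruct (Req_dec (psi x4 t) t) as [H4|H4].
  2:{ apply (OT x4 x1 x2 t); auto. }
  assert (Claim1 : psi x2 t = t).
  { apply NNPP. intros H2.
    assert (Hx4 : forall s, Wset x2 t s -> psi x4 s = s).
    { intros s Ws. apply (KOPW x4 x2 t s); auto. apply commF; auto. }
    assert (Hs0 : exists s0, Wset x2 t s0 /\ psi x1 s0 <> s0).
    { apply NNPP. intros Hn. apply (Collapse x2 x1 t); auto.
      - apply braidF; auto.
      - intros s Ws. apply NNPP. intros Hne. apply Hn. exists s; auto. }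
    destruct Hs0 as [s0 [Ws0 Hs0]].
    assert (Hx3s0 : psi x3 s0 = s0).
    { rewrite E3; auto. apply (proj1 Ws0). }
    assert (Hx3 : forall s, Wset x2 t s -> psi x3 s = s).
    { apply (IdSpread x3 x4 x2 t s0); auto. apply braidF; auto. }
    apply (Collapse x2 x3 t); auto. apply braidF; auto. }
  assert (Claim2 : psi x1 t = t).
  { apply NNPP. intros H1.
    assert (Hx4 : forall s, Wset x1 t s -> psi x4 s = s).
    { intros s Ws. apply (KOPW x4 x1 t s); auto. apply commF; auto. }
    assert (Hx3 : forall s, Wset x1 t s -> psi x3 s = s).
    { intros s Ws. rewrite E3. apply Hx4; auto. apply (proj1 Ws). apply (W_self x1 t s Ws). }
    assert (Hx2 : forall s, Wset x1 t s -> psi x2 s = s).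
    { apply (IdSpread x2 x3 x1 t t); auto. apply braidF; auto. apply W_t; auto. }
    apply (Collapse x1 x2 t); auto. apply braidF; auto. }
  congruence.
Qed.


Lemma eqcb x y : (forall t, I t -> psi x (psi y t) = psi y (psi x t)) ->
  (forall t, I t -> psi x (psi y (psi x t)) = psi y (psi x (psi y t))) ->
  forall t, I t -> psi x t = psi y t.
Proof.
  intros C B t It.
  assert (Iy : I (psi y t)) by (apply maps; auto). assert (Ix : I (psi x t)) by (apply maps; auto).
  assert (H1 : psi x (psi x (psi y t)) = psi x (psi y (psi y t))).
  { transitivity (psi x (psi y (psi x t))). { f_equal. apply C; auto. }
    rewrite (B t It). symmetry. apply C; auto. }
  apply (inj x) in H1; try (apply maps; auto); try (apply maps; apply maps; auto).
  rewrite (C t It) in H1. apply (inj y) in H1; auto.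
Qed.

Lemma main_sec n : (2 <= n)%nat -> MC mul inv e n ->
  forall g h x, I x -> psi g (psi h x) = psi h (psi g x).
Proof.
  intros Hn HMC.
  destruct HMC as [_ [a [b [c [Hgen [H1 [H2 [H3 [H4 [H5 [H6 H7]]]]]]]]]]].
  assert (Hab : forall i, (1 <= i <= n)%nat -> forall t, I t -> psi (a i) t = psi (b i) t).
  { intros i Hi. destruct (Nat.eq_dec i 1%nat) as [->|Hi1].
    - apply (chain4 (a 1%nat) (b 1%nat) (c 1%nat) (b 2%nat)).
      + apply H3; lia.
      + apply H4; lia.
      + apply H1; lia.
      + apply H6; lia.
      + apply H7; lia.
      + symmetry. apply H7; lia.
    - apply (chain4 (a i) (b i) (c (i - 1)%nat) (b (i - 1)%nat)).
      + apply H3; lia.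
      + apply H4; lia.
      + apply H1; lia.
      + apply H6; lia.
      + apply H7; lia.
      + symmetry. apply H7; lia. }
  assert (Hcb : forall j, (1 <= j <= n - 1)%nat -> forall t, I t ->
            psi (c j) t = psi (b j) t /\ psi (c j) t = psi (b (S j)) t).
  { intros j Hj t It. split.
    - symmetry. apply eqcb; auto.
      + intros s Is. rewrite <- !Hab by (auto; lia || (apply maps; auto)).
        apply commF; auto; first [apply H3; lia | symmetry; apply H3; lia].
      + apply braidF. apply H7; lia.
    - symmetry. apply eqcb; auto.
      + intros s Is. rewrite <- !Hab by (auto; lia || (apply maps; auto)).
        apply commF; auto; first [apply H3; lia | symmetry; apply H3; lia].
      + apply braidF. apply H7; lia. }
  assert (Hb : forall i, (1 <= i <= n)%nat -> forall t, I t -> psi (b i) t = psi (b 1%nat) t).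
  { intros i Hi t It. induction i as [|i IH]; [lia|].
    destruct (Nat.eq_dec i 0%nat) as [->|Hi0]; auto.
    rewrite <- IH by lia. assert (Hi1 : (1 <= i <= n - 1)%nat) by lia. destruct (Hcb i Hi1 t It) as [A B]. congruence. }
  assert (Hgen1 : forall s, ((exists i, (1 <= i <= n)%nat /\ (s = a i \/ s = b i)) \/
                   (exists j, (1 <= j <= n - 1)%nat /\ s = c j)) ->
                   forall t, I t -> psi s t = psi (b 1%nat) t).
  { intros s [[i [Hi [->| ->]]]|[j [Hj ->]]] t It.
    - rewrite Hab; auto.
    - auto.
    - destruct (Hcb j Hj t It) as [A _]. rewrite A. apply Hb; auto; lia. }
  assert (Step1 : forall g, forall t, I t -> psi g (psi (b 1%nat) t) = psi (b 1%nat) (psi g t)).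
  { intros g. induction (Hgen g) as [s Hs| |x y _ IHx _ IHy|x _ IHx]; intros t It.
    - rewrite (Hgen1 s Hs (psi (b 1%nat) t)) by (apply maps; auto). rewrite (Hgen1 s Hs t); auto.
    - rewrite !psi_e; auto. apply maps; auto.
    - rewrite !hom; auto; try (apply maps; auto). rewrite IHy, IHx; auto. apply maps; auto.
    - apply comm_inv; auto. }
  intros g. induction (Hgen g) as [s Hs| |x y _ IHx _ IHy|x _ IHx]; intros h t It.
  - rewrite (Hgen1 s Hs (psi h t)) by (apply maps; auto). rewrite (Hgen1 s Hs t); auto. symmetry. apply Step1; auto.
  - rewrite !psi_e; auto. apply maps; auto.
  - rewrite !hom; auto; try (apply maps; auto). rewrite IHy, IHx; auto. apply maps; auto.
  - apply comm_inv; auto.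
Qed.

End Main.

Theorem theorem3p11 (n : nat) (Hn : (2 <= n)%nat)
  (G : Type) (mul : G -> G -> G) (inv : G -> G) (e : G)
  (HG : is_group mul inv e) (HMC : MC mul inv e n)
  (p q : R) (Hpq : p < q) (psi : G -> R -> R)
  (Hpsi : hom_to_Diff2 mul p q psi) :
  forall g h x, in_I p q x -> psi g (psi h x) = psi h (psi g x).
Proof.
  eapply main_sec; eauto.
Qed.
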